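(* Let $\Delta:M_n\to M_n$ be a weak-2-local derivation which is symmetric (i.e. $\Delta(a^* )^*=\Delta(a)$ for all $a\in M_n$), let $p_1,\ldots,p_n$ be mutually orthogonal minimal projections in $M_n$ and $q=1-p_n$. Suppose $\Delta(qaq)=0$ for every $a\in M_n$ and $\Delta(e_{1n})=0$. Then $\Delta\equiv 0$.
   Context: $M_n=M_n(\mathbb{C})$. For $i,j$, $e_{ij}$ is the unique minimal partial isometry in $M_n$ with $e_{ij}^*e_{ij}=p_j$ and $e_{ij}e_{ij}^*=p_i$. A derivation on $M_n$ is a linear map $D$ with $D(ab)=D(a)b+aD(b)$. A (not necessarily linear) map $\Delta:M_n\to M_n$ is a weak-2-local derivation if for every $a,b\in M_n$ and every $\phi\in M_n^*$ there exists a derivation $D_{a,b,\phi}$ such that $\phi\Delta(a)=\phi D_{a,b,\phi}(a)$ and $\phi\Delta(b)=\phi D_{a,b,\phi}(b)$. *)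

(* Defs.v *)
From mathcomp Require Import all_boot all_algebra.
From mathcomp Require Import reals.
From mathcomp.real_closed Require Import complex.
Set Implicit Arguments. Unset Strict Implicit. Unset Printing Implicit Defensive.
Import GRing.Theory Num.Theory.
Local Open Scope ring_scope.

(* M_n(C) is modelled as 'M[R[i]]_n with R : realType (so R[i] is the field
   of complex numbers). *)
Section Defs.
Variables (R : realType) (n : nat).
Local Notation C := (R[i]).
Local Notation M := ('M[C]_n).

Definition adj (a : M) : M := (map_mx Num.conj a)^T.

Definition is_linear_map (f : M -> M) : Prop :=
  forall (c : C) (x y : M), f (c *: x + y) = c *: f x + f y.

Definition is_linear_functional (phi : M -> C) : Prop :=
  forall (c : C) (x y : M), phi (c *: x + y) = c * phi x + phi y.

Definition is_derivation (D : M -> M) : Prop :=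
  is_linear_map D /\ forall a b : M, D (a *m b) = D a *m b + a *m D b.

Definition weak_2_local_derivation (Delta : M -> M) : Prop :=
  forall (a b : M) (phi : M -> C), is_linear_functional phi ->
    exists D : M -> M, is_derivation D /\
      phi (Delta a) = phi (D a) /\ phi (Delta b) = phi (D b).

Definition symmetric_map (Delta : M -> M) : Prop :=
  forall a : M, adj (Delta (adj a)) = Delta a.

Definition is_projection (p : M) : Prop := adj p = p /\ p *m p = p.

(* minimal: nonzero, and every subprojection r <= p (i.e. r p = r) is 0 or p *)
Definition minimal_projection (p : M) : Prop :=
  is_projection p /\ p != 0 /\
  forall r : M, is_projection r -> r *m p = r -> r = 0 \/ r = p.

Definition partial_isometry_from_to (e p_src p_tgt : M) : Prop :=
  adj e *m e = p_src /\ e *m adj e = p_tgt.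

End Defs.

(* Main.v *)
Require Import Defs.
From mathcomp Require Import all_boot all_algebra.
From mathcomp Require Import reals.
From mathcomp.real_closed Require Import complex.
Set Implicit Arguments. Unset Strict Implicit. Unset Printing Implicit Defensive.
Import GRing.Theory Num.Theory.
Local Open Scope ring_scope.

Section Deriv.
Variables (R : realType) (n : nat).
Local Notation C := R[i].
Local Notation M := 'M[C]_n.+1.

Lemma tr_delta (A : M) i j : \tr (delta_mx j i *m A) = A i j.
Proof.
rewrite /mxtrace (bigD1 j) //= big1 ?addr0.
- rewrite !mxE (bigD1 i) //= big1 ?addr0; first by rewrite mxE !eqxx mul1r.
  by move=> l /negbTE nl; rewrite mxE nl andbF mul0r.
- by move=> k /negbTE nk; rewrite mxE big1 // => l _; rewrite mxE nk /= mul0r.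
Qed.

Lemma mx_ext0 (A : M) : (forall c : M, \tr (c *m A) = 0) -> A = 0.
Proof.
by move=> H; apply/matrixP => i j; rewrite mxE -tr_delta H.
Qed.

Variable D : M -> M.
Hypothesis HD : is_derivation D.

Lemma D_add x y : D (x + y) = D x + D y.
Proof. by have := HD.1 1 x y; rewrite !scale1r. Qed.

Lemma D0 : D 0 = 0.
Proof. have h := D_add 0 0; rewrite addr0 in h. by apply: (addrI (D 0)); rewrite addr0 -h. Qed.

Lemma DZ c x : D (c *: x) = c *: D x.
Proof. by have := HD.1 c x 0; rewrite !addr0 D0 addr0. Qed.

Lemma DB x y : D (x - y) = D x - D y.
Proof. by rewrite D_add -scaleN1r DZ scaleN1r. Qed.

Lemma D1 : D 1 = 0.
Proof.
have h := HD.2 1 1; rewrite !mulmx1 mul1mx in h.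
by apply: (addrI (D 1)); rewrite addr0 -{1}h.
Qed.

Lemma Dsum I (r : seq I) (P : pred I) (F : I -> M) :
  D (\sum_(i <- r | P i) F i) = \sum_(i <- r | P i) D (F i).
Proof. exact: (big_morph D D_add D0). Qed.

Lemma tr_sum I (r : seq I) (P : pred I) (F : I -> M) :
  \tr (\sum_(i <- r | P i) F i) = \sum_(i <- r | P i) \tr (F i).
Proof. exact: raddf_sum. Qed.

Lemma tcomm x y : \tr (D (x *m y)) = \tr (D (y *m x)).
Proof.
rewrite !HD.2 !mxtraceD (mxtrace_mulC (D x)) (mxtrace_mulC x).
by rewrite addrC.
Qed.

Lemma trD y : \tr (D y) = 0.
Proof.
set t00 := \tr (D (delta_mx (0 : 'I_n.+1) (0 : 'I_n.+1))).
have td : forall i j : 'I_n.+1, \tr (D (delta_mx i j)) = (i == j)%:R * t00.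
  move=> i j; case: (eqVneq i j) => [<-|nij].
    by rewrite -(mul_delta_mx (0 : 'I_n.+1) i i) tcomm mul_delta_mx mul1r.
  rewrite -(mul_delta_mx j i j) tcomm mul_delta_mx_0 ?D0 ?mxtrace0 ?mul0r //.
  by rewrite eq_sym.
have tall : forall y : M, \tr (D y) = \tr y * t00.
  move=> z; rewrite {1}(matrix_sum_delta z) (big_morph D D_add D0) raddf_sum.
  rewrite /mxtrace mulr_suml; apply: eq_bigr => i _.
  rewrite (big_morph D D_add D0) raddf_sum (bigD1 i) //= big1 ?addr0.
    by rewrite DZ mxtraceZ td eqxx mul1r.
  by move=> j nij; rewrite DZ mxtraceZ td eq_sym (negbTE nij) mul0r mulr0.
have : t00 = 0.
  have := tall 1; rewrite D1 mxtrace0 mxtrace1 => /esym/eqP.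
  by rewrite mulf_eq0 pnatr_eq0 /= => /eqP.
by move=> h; rewrite tall h mulr0.
Qed.

Lemma trxDx x : \tr (x *m D x) = 0.
Proof.
have := trD (x *m x); rewrite HD.2 mxtraceD mxtrace_mulC -mulr2n => /eqP.
by rewrite mulrn_eq0 /= => /eqP.
Qed.

Lemma trxxDx x : \tr (x *m x *m D x) = 0.
Proof.
have := trD (x *m (x *m x)); rewrite HD.2 (HD.2 x x) mulmxDr !mxtraceD.
rewrite mxtrace_mulC (mxtrace_mulC x (D x *m x)) -!mulmxA.
rewrite (mxtrace_mulC (D x) (x *m x)) -mulmxA (mxtrace_mulC x (x *m D x)) -mulmxA.
rewrite -mulr2n -mulrS => /eqP; rewrite mulrn_eq0 /= => /eqP h.
exact: h.
Qed.

End Deriv.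

Section W2L.
Variables (R : realType) (n : nat).
Local Notation C := R[i].
Local Notation M := 'M[C]_n.+1.
Variable Delta : M -> M.
Hypothesis W : weak_2_local_derivation Delta.

Lemma phi_lin (c : M) : is_linear_functional (fun x : M => \tr (c *m x)).
Proof. by move=> k x y; rewrite mulmxDr mxtraceD -scalemxAr mxtraceZ. Qed.

Lemma Delta0 : Delta 0 = 0.
Proof.
apply: mx_ext0 => c; have [D [HD [h _]]] := W 0 0 (phi_lin c).
by rewrite /= in h; rewrite h (D0 HD) mulmx0 mxtrace0.
Qed.

Lemma B1 a b c : Delta b = 0 ->
  (forall D, is_derivation D -> \tr (c *m D (a - b)) = 0) ->
  \tr (c *m Delta a) = 0.
Proof.
move=> hb hc; have [D [HD [h1 h2]]] := W a b (phi_lin c).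
rewrite /= in h1 h2; rewrite h1.
have -> : a = (a - b) + b by rewrite subrK.
rewrite (D_add HD) mulmxDr mxtraceD hc // -h2 hb mulmx0 mxtrace0 addr0.
by [].
Qed.

Lemma Tz a b : Delta b = 0 -> \tr (b *m Delta a) = 0.
Proof.
move=> hb.
have h1 : \tr (a *m Delta a) = 0.
  by apply: (B1 Delta0) => D HD; rewrite subr0 (trxDx HD).
have h2 : \tr ((a - b) *m Delta a) = 0.
  by apply: (B1 hb) => D HD; rewrite (trxDx HD).
have -> : b = a - (a - b) by rewrite opprB addrC subrK.
by rewrite mulmxBl raddfB /= h1 h2 subrr.
Qed.

Lemma Delta1 : Delta 1 = 0.
Proof.
apply: mx_ext0 => c; apply: (B1 Delta0) => D HD.
by rewrite subr0 (D1 HD) mulmx0 mxtrace0.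
Qed.

Lemma AY a Y : Delta (- Y) = 0 -> Delta (Y *m Y) = 0 ->
  \tr ((a *m Y + Y *m a) *m Delta a) = 0.
Proof.
move=> h1 h2.
have s1 : \tr ((a - - Y) *m (a - - Y) *m Delta a) = 0.
  by apply: (B1 h1) => D HD; rewrite (trxxDx HD).
have s2 : \tr ((a - 0) *m (a - 0) *m Delta a) = 0.
  by apply: (B1 Delta0) => D HD; rewrite (trxxDx HD).
have s3 := Tz a h2.
rewrite opprK mulmxDl !mulmxDr addrA !mulmxDl !mxtraceD in s1.
rewrite subr0 in s2; rewrite s2 s3 add0r addr0 in s1.
by rewrite mulmxDl mxtraceD.
Qed.

End W2L.

Section Adj.
Variables (R : realType).
Local Notation C := R[i].

Definition adjr m k (x : 'M[C]_(m, k)) : 'M[C]_(k, m) := (map_mx Num.conj x)^T.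

Lemma adjE n (x : 'M[C]_n) : adj x = adjr x. Proof. by []. Qed.

Lemma adjrK m k (x : 'M[C]_(m, k)) : adjr (adjr x) = x.
Proof. by apply/matrixP => i j; rewrite !mxE conjCK. Qed.

Lemma adjrM m k l (x : 'M[C]_(m, k)) (y : 'M[C]_(k, l)) :
  adjr (x *m y) = adjr y *m adjr x.
Proof. by rewrite /adjr map_mxM trmx_mul. Qed.

Lemma adjrZ m k (s : C) (x : 'M[C]_(m, k)) : adjr (s *: x) = s^* *: adjr x.
Proof. by apply/matrixP => i j; rewrite !mxE rmorphM. Qed.

Lemma adjrE m k (x : 'M[C]_(m, k)) i j : adjr x i j = (x j i)^*.
Proof. by rewrite !mxE. Qed.

Lemma adjr_pos m k (x : 'M[C]_(m, k)) : adjr x *m x = 0 -> x = 0.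
Proof.
move=> h; apply/matrixP => i j; rewrite mxE.
have := congr1 (fun A : 'M[C]_(k, k) => A j j) h; rewrite !mxE => hs.
have hp : forall l : 'I_m, true -> 0 <= adjr x j l * x l j.
  by move=> l _; rewrite adjrE mulrC -normCK exprn_ge0.
have := psumr_eq0P hp hs (isT : true) .
move/(_ i); rewrite adjrE mulrC -normCK => /eqP.
by rewrite expf_eq0 /= normr_eq0 => /eqP.
Qed.

Lemma adjrB m k (x y : 'M[C]_(m, k)) : adjr (x - y) = adjr x - adjr y.
Proof. by apply/matrixP => i j; rewrite !mxE rmorphB. Qed.

Lemma pi_lemma m k (x : 'M[C]_(m, k)) :
  adjr x *m x *m (adjr x *m x) = adjr x *m x -> x *m (adjr x *m x) = x.
Proof.
set Q := adjr x *m x => hQ.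
have hQa : adjr Q = Q by rewrite /Q adjrM adjrK.
have hQd : adjr x *m x = Q by [].
have hX : forall l (X : 'M[C]_(l, k)), X *m adjr x *m x = X *m Q.
  by move=> l X; rewrite -mulmxA.
apply/eqP; rewrite -subr_eq0; apply/eqP; apply: adjr_pos.
rewrite adjrB adjrM hQa mulmxBl !mulmxBr !mulmxA !hX hQd !hQ.
by rewrite !subrr.
Qed.

Lemma min_rank1 n (P : 'M[C]_n.+1) : minimal_projection P ->
  forall z, exists mu, P *m z *m P = mu *: P.
Proof.
case=> [[hPa hPP] [hP0 hmin]] z.
have [j hj] : exists j, col j P != 0.
  case: (pickP (fun j => col j P != 0)) => [j hj|h]; first by exists j.
  move: hP0; have -> : P = 0.
    apply/matrixP => i l; have := h l; rewrite /= => /negbFE/eqP hl.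
    by have := congr1 (fun A : 'M[C]_(n.+1, 1) => A i 0) hl; rewrite !mxE.
  by rewrite eqxx.
set v := col j P in hj *.
have hPv : P *m v = v by rewrite /v !colE mulmxA hPP.
set s := (adjr v *m v) 0 0.
have hvv : adjr v *m v = s%:M by rewrite {1}[adjr v *m v]mx11_scalar.
have hs : s != 0.
  apply/negP => /eqP s0; move: hj; have -> : v = 0.
    by apply: adjr_pos; rewrite hvv s0 raddf0.
  by rewrite eqxx.
have hsc : s^* = s.
  have h := adjrM (adjr v) v; rewrite adjrK in h.
  have := congr1 (fun A : 'M[C]_1 => A 0 0) h; rewrite adjrE /s; exact: id.
set r := s^-1 *: (v *m adjr v).
have hrv : r *m v = v.
  by rewrite /r -scalemxAl -mulmxA hvv mul_mx_scalar scalerA mulVf // scale1r.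
have hvP : adjr v *m P = adjr v.
  by rewrite -{2}hPv adjrM -adjE hPa.
have hproj : is_projection r.
  split.
    by rewrite adjE /r adjrZ adjrM adjrK fmorphV; congr (_^-1 *: _); exact: hsc.
  rewrite /r -scalemxAl -scalemxAr scalerA.
  rewrite mulmxA -(mulmxA v (adjr v) v) hvv mul_mx_scalar -scalemxAl scalerA.
  by rewrite -mulrA mulVf // mulr1.
have hrP : r *m P = r by rewrite /r -scalemxAl -mulmxA hvP.
have hr0 : r != 0.
  by apply/eqP => r0; move: hj; rewrite -/v -hrv r0 mul0mx eqxx.
case: (hmin r hproj hrP) => [r0|rP]; first by rewrite r0 eqxx in hr0.
exists (s^-1 * (adjr v *m z *m v) 0 0).
rewrite -rP /r -scalemxAl -scalemxAl -scalemxAr scalerA.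
have -> : v *m adjr v *m z *m (v *m adjr v) = v *m (adjr v *m z *m v) *m adjr v.
  by rewrite !mulmxA.
rewrite [adjr v *m z *m v]mx11_scalar mul_mx_scalar -scalemxAl !scalerA.
by rewrite [_%:M _ _]mxE eqxx mulr1n mulrAC.
Qed.
End Adj.

Lemma lX (C : pzRingType) (m k l p : nat) (u : 'M[C]_(k, l)) (v : 'M[C]_(l, p)) w :
  u *m v = w -> forall (X : 'M[C]_(m, k)), X *m u *m v = X *m w.
Proof. by move=> h X; rewrite -mulmxA h. Qed.

Section Core.
Variables (R : realType) (n : nat).
Local Notation M := 'M[R[i]]_n.+1.
Variable Delta : M -> M.
Hypothesis W : weak_2_local_derivation Delta.
Variables (P P1 e E q r : M).
Hypotheses
 (hq : forall a, Delta (q *m a *m q) = 0)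
 (hDe : Delta e = 0) (hDE : Delta E = 0)
 (hqP : q + P = 1) (hqr : q = r + P1) (hqq : q *m q = q)
 (hP1 : P1 = e *m E)
 (hmin : forall z, exists mu, P *m z *m P = mu *: P)
 (heP : e *m P = e) (hPE : P *m E = E).
Hypotheses (er : e *m r = 0) (Er : E *m r = 0) (Pr : P *m r = 0)
  (Ee : E *m e = P) (EE : E *m E = 0) (ee : e *m e = 0) (Pe : P *m e = 0)
  (re : r *m e = 0) (rE : r *m E = 0) (rP : r *m P = 0) (rr : r *m r = r)
  (PP : P *m P = P) (qr : q *m r = r) (rq : r *m q = r) (qe : q *m e = e)
  (Eq : E *m q = E) (EP : E *m P = 0).

Lemma trP a : \tr (P *m Delta a) = 0.
Proof.
have -> : P = 1 - q *m 1 *m q by rewrite mulmx1 hqq -hqP [q + P]addrC addrK.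
by rewrite mulmxBl raddfB /= (Tz W a (Delta1 W)) (Tz W a (hq 1)) subrr.
Qed.

Lemma emin z : exists mu, e *m z *m P = mu *: e.
Proof.
have [mu hmu] := hmin z; exists mu.
have -> : e *m z *m P = e *m (P *m z *m P) by rewrite !mulmxA heP.
by rewrite hmu -scalemxAr heP.
Qed.

Lemma pmin z : exists mu, P *m z *m E = mu *: E.
Proof.
have [mu hmu] := hmin z; exists mu.
have -> : P *m z *m E = P *m z *m P *m E by rewrite -(mulmxA (P *m z) P E) hPE.
by rewrite hmu -scalemxAl hPE.
Qed.

Lemma Kcore a : (forall c, \tr (r *m c *m P *m Delta a) = 0) ->
  (forall c, \tr (P *m c *m r *m Delta a) = 0) -> Delta a = 0.
Proof.
move=> h1 h2; apply: mx_ext0 => c.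
have t1 : \tr (q *m c *m q *m Delta a) = 0 := Tz W a (hq c).
have t2 : \tr (q *m c *m P *m Delta a) = 0.
  rewrite hqr !mulmxDl mxtraceD h1 add0r hP1 -(mulmxA e E c).
  have [mu ->] := emin (E *m c).
  by rewrite -scalemxAl mxtraceZ (Tz W a hDe) mulr0.
have t3 : \tr (P *m c *m q *m Delta a) = 0.
  rewrite hqr mulmxDr !mulmxDl mxtraceD h2 add0r hP1 mulmxA -(mulmxA P c e).
  have [mu ->] := pmin (c *m e).
  by rewrite -scalemxAl mxtraceZ (Tz W a hDE) mulr0.
have t4 : \tr (P *m c *m P *m Delta a) = 0.
  have [mu ->] := hmin c.
  by rewrite -scalemxAl mxtraceZ trP mulr0.
have hc : c = (q + P) *m c *m (q + P) by rewrite hqP mul1mx mulmx1.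
rewrite hc !mulmxDl !mulmxDr !mulmxDl !mxtraceD.
by rewrite t1 t2 t3 t4 !addr0.
Qed.

Lemma Dlem1 x : Delta (e + E + r *m x *m P) = 0.
Proof.
apply: Kcore => c.
- set Y := r *m c *m P *m E.
  have hY1 : Delta (- Y) = 0.
    rewrite (_ : - Y = q *m (- Y) *m q) ?hq //.
    by rewrite mulmxN mulNmx /Y !mulmxA qr (lX Eq).
  have hY2 : Delta (Y *m Y) = 0.
    rewrite (_ : Y *m Y = q *m (Y *m Y) *m q) ?hq //.
    by rewrite /Y !mulmxA qr (lX Eq).
  have h := AY W (e + E + r *m x *m P) hY1 hY2.
  rewrite /Y !mulmxDl !mulmxDr !mulmxA in h.
  rewrite !mulmxDl ?mulmxA er Er (lX Pr) (lX Ee) (lX PP) (lX EE) (lX Er) in h.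
  by rewrite !mulmx0 !mul0mx !add0r !addr0 in h.
- set Y := e *m c *m r.
  have hY1 : Delta (- Y) = 0.
    rewrite (_ : - Y = q *m (- Y) *m q) ?hq //.
    by rewrite mulmxN mulNmx /Y !mulmxA qe (lX rq).
  have hY2 : Delta (Y *m Y) = 0.
    rewrite (_ : Y *m Y = q *m (Y *m Y) *m q) ?hq //.
    by rewrite /Y !mulmxA qe (lX rq).
  have h := AY W (e + E + r *m x *m P) hY1 hY2.
  rewrite /Y !mulmxDl !mulmxDr !mulmxDl !mulmxA in h.
  rewrite ee Ee (lX Pe) (lX re) (lX rE) (lX rr) in h.
  rewrite !mulmx0 !mul0mx !add0r !addr0 mxtraceD in h.
  have [mu hmu] := emin (c *m r *m x).
  rewrite (_ : e *m c *m r *m x *m P = mu *: e) in h; last by rewrite -hmu !mulmxA.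
  by rewrite -scalemxAl mxtraceZ (Tz W _ hDe) mulr0 addr0 in h.
Qed.

Lemma Dlem2 x : Delta (e + E + P *m x *m r) = 0.
Proof.
apply: Kcore => c.
- set Y := r *m c *m P *m E.
  have hY1 : Delta (- Y) = 0.
    rewrite (_ : - Y = q *m (- Y) *m q) ?hq //.
    by rewrite mulmxN mulNmx /Y !mulmxA qr (lX Eq).
  have hY2 : Delta (Y *m Y) = 0.
    rewrite (_ : Y *m Y = q *m (Y *m Y) *m q) ?hq //.
    by rewrite /Y !mulmxA qr (lX Eq).
  have h := AY W (e + E + P *m x *m r) hY1 hY2.
  rewrite /Y !mulmxDl !mulmxDr !mulmxDl ?mulmxA in h.
  rewrite er Er (lX rr) (lX Ee) (lX PP) (lX EE) (lX EP) in h.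
  rewrite !mulmx0 !mul0mx !add0r !addr0 mxtraceD in h.
  have [mu hmu] := pmin (x *m r *m c *m P).
  rewrite (_ : P *m x *m r *m c *m P *m E = mu *: E) in h; last by rewrite -hmu !mulmxA.
  by rewrite -scalemxAl mxtraceZ (Tz W _ hDE) mulr0 add0r in h.
- set Y := e *m c *m r.
  have hY1 : Delta (- Y) = 0.
    rewrite (_ : - Y = q *m (- Y) *m q) ?hq //.
    by rewrite mulmxN mulNmx /Y !mulmxA qe (lX rq).
  have hY2 : Delta (Y *m Y) = 0.
    rewrite (_ : Y *m Y = q *m (Y *m Y) *m q) ?hq //.
    by rewrite /Y !mulmxA qe (lX rq).
  have h := AY W (e + E + P *m x *m r) hY1 hY2.
  rewrite /Y !mulmxDl !mulmxDr !mulmxDl ?mulmxA in h.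
  rewrite ee Ee (lX re) (lX rE) (lX rP) in h.
  by rewrite (lX re) !mulmx0 !mul0mx !add0r !addr0 in h.
Qed.

Lemma main_core a : Delta a = 0.
Proof.
have d0 := Dlem1 0; rewrite mulmx0 mul0mx addr0 in d0.
apply: Kcore => c.
- rewrite (_ : r *m c *m P = (e + E + r *m c *m P) - (e + E)); last first.
    by rewrite addrAC subrr add0r.
  by rewrite mulmxBl raddfB /= (Tz W _ (Dlem1 c)) (Tz W _ d0) subrr.
- rewrite (_ : P *m c *m r = (e + E + P *m c *m r) - (e + E)); last first.
    by rewrite addrAC subrr add0r.
  by rewrite mulmxBl raddfB /= (Tz W _ (Dlem2 c)) (Tz W _ d0) subrr.
Qed.

End Core.

Lemma one_dim (R : realType) (Delta : 'M[R[i]]_1 -> 'M[R[i]]_1) :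
  weak_2_local_derivation Delta -> forall a, Delta a = 0.
Proof.
move=> W a; apply: mx_ext0 => c; apply: (B1 W (Delta0 W)) => D HD.
rewrite subr0 {1}[a]mx11_scalar -scalemx1 (DZ HD) (D1 HD) scaler0.
by rewrite mulmx0 mxtrace0.
Qed.

Lemma adj0 (R : realType) n : adj (0 : 'M[R[i]]_n) = 0.
Proof. by apply/matrixP => i j; rewrite !mxE rmorph0. Qed.

Theorem lemma2p9 (R : realType) (n : nat)
  (Delta : 'M[R[i]]_n.+1 -> 'M[R[i]]_n.+1)
  (p : 'I_n.+1 -> 'M[R[i]]_n.+1) (e1n : 'M[R[i]]_n.+1) :
  weak_2_local_derivation Delta ->
  symmetric_map Delta ->
  (forall k, minimal_projection (p k)) ->
  (forall k l, k != l -> p k *m p l = 0) ->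
  partial_isometry_from_to e1n (p ord_max) (p ord0) ->
  (forall a, Delta ((1 - p ord_max) *m a *m (1 - p ord_max)) = 0) ->
  Delta e1n = 0 ->
  forall a, Delta a = 0.
Proof.
move=> W hsym hmp horth [hEe heE] hq hDe.
case: (posnP n) => [n0|npos].
  by subst n; exact: one_dim W.
have hne : (ord0 : 'I_n.+1) != ord_max.
  apply/eqP => h; have := congr1 val h => /= h0.
  by rewrite -h0 ltnn in npos.
set P := p ord_max in hEe heE hq *; set P1 := p ord0 in hEe heE *.
set e := e1n in hEe heE hDe *; set E := adj e in hEe heE *.
have [[hPa PP] _] := hmp ord_max; have [[hP1a P1P1] _] := hmp ord0.
rewrite -/P in hPa PP; rewrite -/P1 in hP1a P1P1.
have PP1 : P *m P1 = 0 by apply: horth; rewrite eq_sym.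
have P1P : P1 *m P = 0 by apply: horth.
have heP : e *m P = e.
  have := @pi_lemma R _ _ e; rewrite -adjE hEe; apply; exact: PP.
have EP1 : E *m P1 = E.
  have := @pi_lemma R _ _ E; rewrite -!adjE adjE adjrK -/e heE; apply; exact: P1P1.
have hPE : P *m E = E by rewrite -hEe -mulmxA heE EP1.
have P1e : P1 *m e = e by rewrite -heE -mulmxA hEe heP.
have ee : e *m e = 0.
  rewrite (_ : e *m e = (e *m P) *m (P1 *m e)); last by rewrite heP P1e.
  by rewrite mulmxA -(mulmxA e P P1) PP1 mulmx0 mul0mx.
have EE : E *m E = 0.
  rewrite (_ : E *m E = (E *m P1) *m (P *m E)); last by rewrite EP1 hPE.
  by rewrite mulmxA -(mulmxA E P1 P) P1P mulmx0 mul0mx.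
have Pe : P *m e = 0 by rewrite -P1e mulmxA PP1 mul0mx.
have EP : E *m P = 0 by rewrite -EP1 -mulmxA P1P mulmx0.
have eP1 : e *m P1 = 0 by rewrite -heP -mulmxA PP1 mulmx0.
have P1E : P1 *m E = 0 by rewrite -hPE mulmxA P1P mul0mx.
have hDE : Delta E = 0.
  have hee : adj (adj e) = e by rewrite !adjE adjrK.
  by rewrite /E -hsym hee hDe adj0.
set q := 1 - P.
set r := q - P1.
have qq : q *m q = q.
  by rewrite /q mulmxBl !mulmxBr !mul1mx mulmx1 PP subrr subr0.
have qP1 : q *m P1 = P1 by rewrite /q mulmxBl mul1mx PP1 subr0.
have P1q : P1 *m q = P1 by rewrite /q mulmxBr mulmx1 P1P subr0.
have rP : r *m P = 0.
  by rewrite /r /q !mulmxBl mul1mx PP P1P subrr subr0.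
have Pr : P *m r = 0.
  by rewrite /r /q !mulmxBr mulmx1 PP PP1 subrr subr0.
have re : r *m e = 0.
  by rewrite /r /q !mulmxBl mul1mx Pe P1e subr0 subrr.
have rE : r *m E = 0.
  by rewrite /r /q !mulmxBl mul1mx hPE P1E subrr subr0.
have er : e *m r = 0.
  by rewrite /r /q !mulmxBr mulmx1 heP eP1 subrr subr0.
have Er : E *m r = 0.
  by rewrite /r /q !mulmxBr mulmx1 EP EP1 subr0 subrr.
have qr : q *m r = r by rewrite /r mulmxBr qq qP1.
have rq : r *m q = r by rewrite /r mulmxBl qq P1q.
have rr : r *m r = r.
  by rewrite {1}/r mulmxBl qr /r mulmxBr P1q P1P1 subrr subr0.
have qe : q *m e = e by rewrite /q mulmxBl mul1mx Pe subr0.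
have Eq : E *m q = E by rewrite /q mulmxBr mulmx1 EP subr0.
have hqP : q + P = 1 by rewrite /q subrK.
have hqr : q = r + P1 by rewrite /r subrK.
have hP1 : P1 = e *m E by rewrite heE.
have hmin := min_rank1 (hmp ord_max).
exact: (main_core W hq hDe hDE hqP hqr qq hP1 hmin heP hPE er Er Pr hEe EE ee Pe
  re rE rP rr PP qr rq qe Eq EP).
Qed.
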